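(* Let $r>\frac12$ and let $y(s,r)=s+\mathop{K}_{n=1}^{\infty}\left(\dfrac{(2n-1)^2r^2-(r-1)^2}{2s}\right)$ for $s>0$; this is a positive continuous function with $y(s,r)>s$ and $y(s,r)\,y(s+2r,r)=(s+1)(s+2r-1)$ for $s>0$. Then the functional equation $$f(s,r)+f(s+2r,r)=-\frac{1}{(s+1)^2}-\frac{1}{(s+2r-1)^2}\qquad(s>0)$$ has a unique solution satisfying $\lim_{s\to\infty}f(s,r)=0$, and this solution is $f(s,r)=\frac{\partial^2}{\partial s^2}(\ln y)(s,r)$.
   Context: $\mathop{K}_{n=1}^{\infty}\left(\frac{a_n}{b}\right)$ denotes the continued fraction $\cfrac{a_1}{b+\cfrac{a_2}{b+\cdots}}$ (limit of convergents). *)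

(* Defs.v *)
From Stdlib Require Import Reals.
From Coquelicot Require Import Coquelicot.
Open Scope R_scope.

Fixpoint cf_tail (a : nat -> R) (b : R) (k m : nat) : R :=
  match m with
  | O => 0
  | S m' => a k / (b + cf_tail a b (S k) m')
  end.

(* n-th convergent of K_{n=1}^oo (a_n / b) = a_1/(b + a_2/(b + ... + a_n/b)). *)
Definition cf_conv (a : nat -> R) (b : R) (n : nat) : R := cf_tail a b 1 n.

Definition y_num (r : R) (n : nat) : R :=
  (2 * INR n - 1) ^ 2 * r ^ 2 - (r - 1) ^ 2.

Definition rhs (r s : R) : R := - / (s + 1) ^ 2 - / (s + 2 * r - 1) ^ 2.

(* Main.v *)
Require Import Defs.
From Stdlib Require Import Reals Lra Lia.
From Coquelicot Require Import Coquelicot.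
Open Scope R_scope.

Fixpoint ssum (g : R -> R) (c : R) (N : nat) (x : R) : R :=
  match N with O => 0 | S n => ssum g c n x + g (x + INR n * c) end.

Definition phi0 r t := ln (t+1) + ln (t+2*r-1).
Definition phi1 r t := /(t+1) + /(t+2*r-1).
Definition phi2 r t := -(/(t+1)^2 + /(t+2*r-1)^2).
Definition phi3 r t := 2*(/(t+1)^3 + /(t+2*r-1)^3).
Definition psi r t := /(t+1)^2 + /(t+2*r-1)^2.
Definition dif (f : R -> R) r t := f t - f (t + 2*r).

Lemma d_phi0 r t : /2 < r -> 0 < t -> is_derive (phi0 r) t (phi1 r t).
Proof. intros hr ht. unfold phi0, phi1. auto_derive.
- split; [lra|split;[lra|auto]].
- field. lra.
Qed.

Lemma d_phi1 r t : /2 < r -> 0 < t -> is_derive (phi1 r) t (phi2 r t).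
Proof. intros hr ht. unfold phi1, phi2. auto_derive.
- split; [lra|split;[lra|auto]].
- field. lra.
Qed.

Lemma d_phi2 r t : /2 < r -> 0 < t -> is_derive (phi2 r) t (phi3 r t).
Proof. intros hr ht. unfold phi2, phi3. auto_derive.
- repeat split; intro H; nra.
- field. lra.
Qed.

Lemma is_derive_shift (f : R -> R) a t l :
  is_derive f (t + a) l -> is_derive (fun u => f (u + a)) t l.
Proof.
  intro H.
  assert (Hg : is_derive (fun u : R => u + a) t 1).
  { auto_derive; auto; ring. }
  pose proof (is_derive_comp f (fun u => u + a) t l 1 H Hg) as K.
  replace l with (scal 1 l); [exact K|].
  unfold scal; simpl; unfold mult; simpl; ring.
Qed.

Lemma d_dif f f' r t :
  (forall u, 0 < u -> is_derive f u (f' u)) -> 0 < r -> 0 < t ->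
  is_derive (dif f r) t (dif f' r t).
Proof.
  intros Hf hr ht. unfold dif.
  apply (is_derive_minus f (fun u => f (u + 2*r))).
  - apply Hf; auto.
  - apply is_derive_shift. apply Hf; lra.
Qed.

Lemma d_ssum g g' c N x :
  (forall u, 0 < u -> is_derive g u (g' u)) -> 0 < c -> 0 < x ->
  is_derive (ssum g c N) x (ssum g' c N x).
Proof.
  intros Hg hc hx. induction N as [|n IH]; simpl.
  - apply (is_derive_const (K:=R_AbsRing) (V:=R_NormedModule) 0).
  - apply (is_derive_plus (ssum g c n) (fun x => g (x + INR n * c))); auto.
    apply is_derive_shift. apply Hg.
    pose proof (pos_INR n). nra.
Qed.

Definition L0 r n x := ssum (dif (phi0 r) r) (4*r) n x + ln (x + INR n * (4*r)).
Definition L1 r n x := ssum (dif (phi1 r) r) (4*r) n x + / (x + INR n * (4*r)).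
Definition L2 r n x := ssum (dif (phi2 r) r) (4*r) n x - / (x + INR n * (4*r))^2.
Definition L3 r n x := ssum (dif (phi3 r) r) (4*r) n x + 2 * / (x + INR n * (4*r))^3.

Lemma tpos r n x : /2 < r -> 0 < x -> 0 < x + INR n * (4*r).
Proof. intros. pose proof (pos_INR n). nra. Qed.

Lemma d_L0 r n x : /2 < r -> 0 < x -> is_derive (L0 r n) x (L1 r n x).
Proof.
  intros hr hx. unfold L0, L1. pose proof (tpos r n x hr hx) as T.
  apply (is_derive_plus (ssum (dif (phi0 r) r) (4*r) n) (fun x => ln (x + INR n * (4*r)))).
  - apply d_ssum; try lra. intros u hu. apply d_dif; try lra. intros; apply d_phi0; lra.
  - auto_derive; [lra| field; lra].
Qed.

Lemma d_L1 r n x : /2 < r -> 0 < x -> is_derive (L1 r n) x (L2 r n x).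
Proof.
  intros hr hx. unfold L1, L2. pose proof (tpos r n x hr hx) as T.
  apply (is_derive_plus (ssum (dif (phi1 r) r) (4*r) n) (fun x => / (x + INR n * (4*r)))).
  - apply d_ssum; try lra. intros u hu. apply d_dif; try lra. intros; apply d_phi1; lra.
  - auto_derive; [lra| field; lra].
Qed.

Lemma d_L2 r n x : /2 < r -> 0 < x -> is_derive (L2 r n) x (L3 r n x).
Proof.
  intros hr hx. unfold L2, L3. pose proof (tpos r n x hr hx) as T.
  change (is_derive (fun x => ssum (dif (phi2 r) r) (4*r) n x + (fun x => - / (x + INR n * (4*r))^2) x) x
    (ssum (dif (phi3 r) r) (4 * r) n x + 2 * / (x + INR n * (4 * r)) ^ 3)).
  apply (is_derive_plus (ssum (dif (phi2 r) r) (4*r) n) (fun x => - / (x + INR n * (4*r))^2)).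
  - apply d_ssum; try lra. intros u hu. apply d_dif; try lra. intros; apply d_phi2; lra.
  - auto_derive; [intro H; nra| field; lra].
Qed.

Lemma ssum_bound a r x n m : /2 < r -> 0 < x ->
  (forall u, 0 < u -> 0 <= a u) ->
  (forall u v, 0 < u -> u <= v -> a v <= a u) -> (n <= m)%nat ->
  0 <= ssum (dif a r) (4*r) m x - ssum (dif a r) (4*r) n x
    <= a (x + INR n * (4*r)) - a (x + INR m * (4*r)).
Proof.
  intros hr hx Hp Hd Hnm.
  replace m with (n + (m - n))%nat by lia.
  generalize (m - n)%nat. intro k. induction k as [|k IH].
  - rewrite Nat.add_0_r. lra.
  - replace (n + S k)%nat with (S (n + k)) by lia. simpl ssum.
    unfold dif at 2.
    pose proof (tpos r (n+k) x hr hx) as T.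
    rewrite S_INR.
    set (t := x + INR (n + k) * (4 * r)) in *.
    replace (x + (INR (n + k) + 1) * (4 * r)) with (t + 4*r) by (unfold t; ring).
    assert (a (t + 2*r) <= a t) by (apply Hd; lra).
    assert (a (t + 4*r) <= a (t + 2*r)) by (apply Hd; lra).
    assert (dif a r t = a t - a (t + 2*r)) by reflexivity. lra.
Qed.

Lemma ssum_ext g h c n x : (forall u, g u = h u) -> ssum g c n x = ssum h c n x.
Proof. intro H. induction n; simpl; [auto| rewrite IHn, H; auto]. Qed.

Lemma ssum_opp g c n x : ssum (fun u => - g u) c n x = - ssum g c n x.
Proof. induction n; simpl; [ring| rewrite IHn; ring]. Qed.

Lemma ssum_dif_phi2 r n x :
  ssum (dif (phi2 r) r) (4*r) n x = - ssum (dif (psi r) r) (4*r) n x.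
Proof.
  rewrite <- ssum_opp. apply ssum_ext. intro u. unfold dif, phi2, psi. ring.
Qed.

Lemma phi1_pos r u : /2 < r -> 0 < u -> 0 <= phi1 r u.
Proof.
  intros. unfold phi1.
  assert (0 < /(u+1)) by (apply Rinv_0_lt_compat; lra).
  assert (0 < /(u+2*r-1)) by (apply Rinv_0_lt_compat; lra). lra.
Qed.

Lemma phi1_dec r u v : /2 < r -> 0 < u -> u <= v -> phi1 r v <= phi1 r u.
Proof.
  intros. unfold phi1.
  assert (/(v+1) <= /(u+1)) by (apply Rinv_le_contravar; lra).
  assert (/(v+2*r-1) <= /(u+2*r-1)) by (apply Rinv_le_contravar; lra). lra.
Qed.

Lemma psi_pos r u : /2 < r -> 0 < u -> 0 <= psi r u.
Proof.
  intros. unfold psi.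
  assert (0 < /(u+1)^2) by (apply Rinv_0_lt_compat; apply pow_lt; lra).
  assert (0 < /(u+2*r-1)^2) by (apply Rinv_0_lt_compat; apply pow_lt; lra). lra.
Qed.

Lemma psi_dec r u v : /2 < r -> 0 < u -> u <= v -> psi r v <= psi r u.
Proof.
  intros. unfold psi.
  assert (/(v+1)^2 <= /(u+1)^2) by (apply Rinv_le_contravar; [apply pow_lt; lra| nra]).
  assert (/(v+2*r-1)^2 <= /(u+2*r-1)^2) by (apply Rinv_le_contravar; [apply pow_lt; lra| nra]). lra.
Qed.

Lemma tail_small r eps : /2 < r -> 0 < eps -> exists N, forall n x, (N <= n)%nat -> 0 < x ->
  1 <= x + INR n * (4*r) /\ 3 / (x + INR n * (4*r)) < eps.
Proof.
  intros hr he. destruct (INR_unbounded ((1 + 3/eps)/(4*r))) as [N HN].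
  exists N. intros n x Hn hx.
  apply le_INR in Hn.
  assert (INR n * (4*r) > 1 + 3/eps).
  { assert (INR n > (1 + 3 / eps) / (4 * r)) by lra.
    apply (Rmult_gt_compat_r (4*r)) in H; [|lra].
    unfold Rdiv in H. rewrite Rmult_assoc, Rinv_l in H; lra. }
  assert (0 < 3/eps) by (apply Rdiv_lt_0_compat; lra).
  split; [lra|].
  apply (Rmult_lt_reg_r (x + INR n * (4*r))); [lra|].
  unfold Rdiv. rewrite Rmult_assoc, Rinv_l by lra.
  assert (3 = eps * (3/eps)) by (field; lra). nra.
Qed.

Lemma inv_shift_le t b : 0 < t -> 0 <= b -> / (t + b) <= / t.
Proof. intros. apply Rinv_le_contravar; lra. Qed.

Lemma phi1_le r t : /2 < r -> 0 < t -> phi1 r t <= 2 / t.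
Proof.
  intros. unfold phi1.
  assert (/(t+1) <= /t) by (apply inv_shift_le; lra).
  assert (/(t+2*r-1) <= /t) by (replace (t+2*r-1) with (t + (2*r-1)) by ring; apply inv_shift_le; lra).
  unfold Rdiv. lra.
Qed.

Lemma sq_inv_le t : 1 <= t -> / t ^ 2 <= / t.
Proof. intros. apply Rinv_le_contravar; nra. Qed.

Lemma psi_le r t : /2 < r -> 1 <= t -> psi r t <= 2 / t.
Proof.
  intros. unfold psi.
  assert (/(t+1)^2 <= /t^2) by (apply Rinv_le_contravar; [apply pow_lt; lra| nra]).
  assert (/(t+2*r-1)^2 <= /t^2) by (apply Rinv_le_contravar; [apply pow_lt; lra| nra]).
  pose proof (sq_inv_le t H0).
  unfold Rdiv. lra.
Qed.

Lemma L1_cauchy r : /2 < r -> CVU_cauchy (L1 r) (fun x => 0 < x).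
Proof.
  intros hr eps. destruct (tail_small r eps hr (cond_pos eps)) as [N HN].
  assert (K : forall n m x, 0 < x -> (N <= n)%nat -> (n <= m)%nat -> Rabs (L1 r m x - L1 r n x) < eps).
  { intros n m x hx Hn Hnm. destruct (HN n x Hn hx) as [H1 H2].
    pose proof (ssum_bound (phi1 r) r x n m hr hx (fun u hu => phi1_pos r u hr hu)
      (fun u v hu huv => phi1_dec r u v hr hu huv) Hnm) as B.
    pose proof (phi1_pos r (x + INR m * (4*r)) hr (tpos r m x hr hx)).
    pose proof (phi1_le r (x + INR n * (4*r)) hr (tpos r n x hr hx)).
    assert (INR n <= INR m) by (apply le_INR; auto).
    assert (x + INR n * (4*r) <= x + INR m * (4*r)) by nra.
    assert (/(x + INR m * (4*r)) <= /(x + INR n * (4*r))) by (apply Rinv_le_contravar; lra).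
    assert (0 < /(x + INR m * (4*r))) by (apply Rinv_0_lt_compat; apply tpos; lra).
    unfold L1. unfold Rdiv in *. apply Rabs_def1; lra. }
  exists N. intros n m x hx Hn Hm. destruct (Compare_dec.le_lt_dec n m) as [l|l].
  - rewrite Rabs_minus_sym. apply K; auto.
  - apply K; auto. lia.
Qed.

Lemma L2_cauchy r : /2 < r -> CVU_cauchy (L2 r) (fun x => 0 < x).
Proof.
  intros hr eps. destruct (tail_small r eps hr (cond_pos eps)) as [N HN].
  assert (K : forall n m x, 0 < x -> (N <= n)%nat -> (n <= m)%nat -> Rabs (L2 r m x - L2 r n x) < eps).
  { intros n m x hx Hn Hnm. destruct (HN n x Hn hx) as [H1 H2].
    pose proof (ssum_bound (psi r) r x n m hr hx (fun u hu => psi_pos r u hr hu)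
      (fun u v hu huv => psi_dec r u v hr hu huv) Hnm) as B.
    pose proof (psi_pos r (x + INR m * (4*r)) hr (tpos r m x hr hx)).
    pose proof (psi_le r (x + INR n * (4*r)) hr H1).
    assert (INR n <= INR m) by (apply le_INR; auto).
    assert (x + INR n * (4*r) <= x + INR m * (4*r)) by nra.
    assert (/(x + INR m * (4*r))^2 <= /(x + INR n * (4*r))^2) by (apply Rinv_le_contravar; [apply pow_lt; lra| nra]).
    assert (0 < /(x + INR m * (4*r))^2) by (apply Rinv_0_lt_compat; apply pow_lt; apply tpos; lra).
    pose proof (sq_inv_le _ H1).
    unfold L2. rewrite !ssum_dif_phi2. unfold Rdiv in *. apply Rabs_def1; lra. }
  exists N. intros n m x hx Hn Hm. destruct (Compare_dec.le_lt_dec n m) as [l|l].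
  - rewrite Rabs_minus_sym. apply K; auto.
  - apply K; auto. lia.
Qed.

Section Y.
Variables (r : R) (y : R -> R).
Hypothesis hr : / 2 < r.
Hypothesis hgt : forall s, 0 < s -> s < y s.
Hypothesis hfe : forall s, 0 < s -> y s * y (s + 2 * r) = (s + 1) * (s + 2 * r - 1).

Lemma y_lt t : 0 < t -> y t < t + 1.
Proof.
  intros ht. pose proof (hfe t ht). pose proof (hgt t ht).
  pose proof (hgt (t + 2*r) ltac:(lra)). nra.
Qed.

Lemma lny_sum t : 0 < t -> ln (y t) + ln (y (t + 2*r)) = phi0 r t.
Proof.
  intros ht. pose proof (hgt t ht). pose proof (hgt (t + 2*r) ltac:(lra)).
  rewrite <- ln_mult by lra. rewrite hfe by auto. unfold phi0.
  apply ln_mult; lra.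
Qed.

Lemma L0_ssum n x : 0 < x ->
  ssum (dif (phi0 r) r) (4*r) n x = ln (y x) - ln (y (x + INR n * (4*r))).
Proof.
  intros hx. induction n as [|n IH]; simpl ssum.
  - simpl. replace (x + 0 * (4*r)) with x by ring. ring.
  - rewrite IH. pose proof (tpos r n x hr hx) as T.
    rewrite S_INR. set (t := x + INR n * (4 * r)) in *.
    replace (x + (INR n + 1) * (4 * r)) with (t + 2*r + 2*r) by (unfold t; ring).
    unfold dif. rewrite <- (lny_sum t T), <- (lny_sum (t + 2*r)) by lra. ring.
Qed.

Lemma eps_bound t : 0 < t -> 0 < ln (y t) - ln t < / t.
Proof.
  intros ht. pose proof (hgt t ht). pose proof (y_lt t ht).
  assert (ln t < ln (y t)) by (apply ln_increasing; lra).
  assert (ln (y t) < ln (t + 1)) by (apply ln_increasing; lra).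
  assert (ln (t+1) < ln t + / t).
  { rewrite <- (ln_exp (/t)), <- ln_mult by (try lra; apply exp_pos).
    apply ln_increasing; [lra|].
    pose proof (exp_ineq1 (/t) (Rgt_not_eq _ _ (Rinv_0_lt_compat t ht))).
    replace (t + 1) with (t * (1 + /t)) by (field; lra). nra. }
  lra.
Qed.

Lemma L0_close n x : 0 < x -> Rabs (L0 r n x - ln (y x)) < / (x + INR n * (4*r)).
Proof.
  intros hx. unfold L0. rewrite L0_ssum by auto.
  pose proof (eps_bound _ (tpos r n x hr hx)).
  apply Rabs_def1; lra.
Qed.

Lemma L0_lim x : 0 < x -> is_lim_seq (fun n => L0 r n x) (ln (y x)).
Proof.
  intros hx. apply is_lim_seq_spec. intros eps.
  destruct (tail_small r eps hr (cond_pos eps)) as [N HN].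
  exists N. intros n Hn. destruct (HN n x Hn hx) as [H1 H2].
  pose proof (L0_close n x hx).
  assert (/ (x + INR n * (4*r)) <= 3 / (x + INR n * (4*r))).
  { unfold Rdiv. pose proof (Rinv_0_lt_compat _ (tpos r n x hr hx)). lra. }
  lra.
Qed.

Lemma L0_CVU : CVU_dom (L0 r) (fun x => 0 < x).
Proof.
  intros eps. destruct (tail_small r eps hr (cond_pos eps)) as [N HN].
  exists N. intros n Hn x hx. destruct (HN n x Hn hx) as [H1 H2].
  rewrite (is_lim_seq_unique _ _ (L0_lim x hx)). simpl.
  pose proof (L0_close n x hx).
  assert (/ (x + INR n * (4*r)) <= 3 / (x + INR n * (4*r))).
  { unfold Rdiv. pose proof (Rinv_0_lt_compat _ (tpos r n x hr hx)). lra. }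
  lra.
Qed.

End Y.

Lemma CVU_ext (f g : nat -> R -> R) (D : R -> Prop) :
  (forall n x, D x -> f n x = g n x) -> CVU_dom f D -> CVU_dom g D.
Proof.
  intros H C eps. destruct (C eps) as [N HN]. exists N. intros n Hn x Dx.
  rewrite <- H by auto.
  rewrite <- (Lim_seq_ext (fun n => f n x)) by (intro; apply H; auto).
  apply HN; auto.
Qed.

Lemma pos_locally x : 0 < x -> locally x (fun u => 0 < u).
Proof. intro hx. apply (open_gt 0 x hx). Qed.

Lemma step (fn fn' fn'' : nat -> R -> R) :
  (forall n x, 0 < x -> is_derive (fn n) x (fn' n x)) ->
  (forall n x, 0 < x -> is_derive (fn' n) x (fn'' n x)) ->
  CVU_dom fn (fun x => 0 < x) -> CVU_dom fn' (fun x => 0 < x) ->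
  forall x, 0 < x ->
  is_derive (fun y => real (Lim_seq (fun n => fn n y))) x (real (Lim_seq (fun n => fn' n x))).
Proof.
  intros H1 H2 C1 C2 x hx.
  rewrite <- (Lim_seq_ext (fun n => Derive (fn n) x)) by (intro; apply is_derive_unique; auto).
  apply (CVU_Derive fn (fun x => 0 < x)); auto.
  - apply open_gt.
  - intros a b z Ha Hb Hz. lra.
  - intros n z hz. eexists. apply H1; auto.
  - intros n z hz.
    apply (continuity_pt_ext_loc (fn' n)).
    + apply (filter_imp (fun u => 0 < u)); [|apply pos_locally; auto].
      intros u hu. symmetry. apply is_derive_unique. auto.
    + apply continuity_pt_filterlim. apply (ex_derive_continuous (fn' n)).
      eexists. apply H2; auto.
  - apply (CVU_ext fn'); auto. intros n z hz. symmetry. apply is_derive_unique; auto.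
Qed.

Lemma real_lim u l : is_lim_seq u (Finite l) -> real (Lim_seq u) = l.
Proof. intro H. rewrite (is_lim_seq_unique _ _ H). reflexivity. Qed.

Lemma L2_bound r n s : /2 < r -> 1 <= s -> Rabs (L2 r n s) <= 3 / s.
Proof.
  intros hr hs. unfold L2. rewrite ssum_dif_phi2.
  pose proof (ssum_bound (psi r) r s 0 n hr ltac:(lra) (fun u hu => psi_pos r u hr hu)
      (fun u v hu huv => psi_dec r u v hr hu huv) ltac:(lia)) as B.
  simpl ssum in B. replace (s + INR 0 * (4*r)) with s in B by (simpl; ring).
  pose proof (psi_pos r (s + INR n * (4*r)) hr (tpos r n s hr ltac:(lra))).
  pose proof (psi_le r s hr hs).
  pose proof (pos_INR n).
  assert (0 <= INR n * (4*r)) by nra.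
  assert (/(s + INR n * (4*r))^2 <= /s^2) by (apply Rinv_le_contravar; [apply pow_lt; lra| nra]).
  assert (0 < /(s + INR n * (4*r))^2) by (apply Rinv_0_lt_compat; apply pow_lt; apply tpos; lra).
  pose proof (sq_inv_le _ hs).
  unfold Rdiv in *. apply Rabs_le; lra.
Qed.

Theorem lemma3 (r : R) (y : R -> R)
  (hr : / 2 < r)
  (hy : forall s, 0 < s -> is_lim_seq (cf_conv (y_num r) (2 * s)) (y s - s))
  (hpos : forall s, 0 < s -> 0 < y s)
  (hcont : forall s, 0 < s -> continuous y s)
  (hgt : forall s, 0 < s -> s < y s)
  (hfe : forall s, 0 < s -> y s * y (s + 2 * r) = (s + 1) * (s + 2 * r - 1)) :
  exists F : R -> R,
    (exists g : R -> R, forall s, 0 < s ->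
        is_derive (fun t => ln (y t)) s (g s) /\ is_derive g s (F s)) /\
    (forall s, 0 < s -> F s + F (s + 2 * r) = rhs r s) /\
    is_lim F p_infty 0 /\
    (forall f : R -> R,
        (forall s, 0 < s -> f s + f (s + 2 * r) = rhs r s) ->
        is_lim f p_infty 0 ->
        forall s, 0 < s -> f s = F s).
Proof.
  set (G1 := fun x => real (Lim_seq (fun n => L1 r n x))).
  set (F := fun x => real (Lim_seq (fun n => L2 r n x))).
  assert (C1 : CVU_dom (L1 r) (fun x => 0 < x)) by (apply CVU_dom_cauchy, L1_cauchy; auto).
  assert (C2 : CVU_dom (L2 r) (fun x => 0 < x)) by (apply CVU_dom_cauchy, L2_cauchy; auto).
  assert (C0 := L0_CVU r y hr hgt hfe).
  assert (D0 : forall s, 0 < s -> is_derive (fun t => ln (y t)) s (G1 s)).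
  { intros s hs.
    apply (is_derive_ext_loc (fun y => real (Lim_seq (fun n => L0 r n y)))).
    - apply (filter_imp (fun u => 0 < u)); [|apply pos_locally; auto].
      intros u hu. apply real_lim. apply L0_lim; auto.
    - apply (step (L0 r) (L1 r) (L2 r)); auto.
      + intros; apply d_L0; auto.
      + intros; apply d_L1; auto. }
  assert (D1 : forall s, 0 < s -> is_derive G1 s (F s)).
  { intros s hs. apply (step (L1 r) (L2 r) (L3 r)); auto.
    + intros; apply d_L1; auto.
    + intros; apply d_L2; auto. }
  assert (FE1 : forall s, 0 < s -> G1 s + G1 (s + 2*r) = phi1 r s).
  { intros s hs.
    assert (H : is_derive (phi0 r) s (G1 s + G1 (s + 2*r))).
    { apply (is_derive_ext_loc (fun t => ln (y t) + ln (y (t + 2*r)))).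
      - apply (filter_imp (fun u => 0 < u)); [|apply pos_locally; auto].
        intros u hu. apply lny_sum; auto.
      - apply (is_derive_plus (fun t => ln (y t)) (fun t => ln (y (t + 2*r)))).
        + apply D0; auto.
        + apply (is_derive_shift (fun t => ln (y t))). apply D0; lra. }
    apply is_derive_unique in H. rewrite <- H. apply is_derive_unique, d_phi0; auto. }
  assert (FE : forall s, 0 < s -> F s + F (s + 2 * r) = rhs r s).
  { intros s hs.
    assert (H : is_derive (phi1 r) s (F s + F (s + 2*r))).
    { apply (is_derive_ext_loc (fun t => G1 t + G1 (t + 2*r))).
      - apply (filter_imp (fun u => 0 < u)); [|apply pos_locally; auto].
        intros u hu. apply FE1; auto.
      - apply (is_derive_plus G1 (fun t => G1 (t + 2*r))).
        + apply D1; auto.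
        + apply (is_derive_shift G1). apply D1; lra. }
    apply is_derive_unique in H. rewrite <- H.
    rewrite (is_derive_unique _ _ _ (d_phi1 r s hr hs)).
    unfold phi2, rhs. ring. }
  assert (FB : forall s, 1 <= s -> Rabs (F s) <= 3 / s).
  { intros s hs.
    destruct (CVU_CVS_dom _ _ C2 s ltac:(lra)) as [l Hl].
    unfold F. rewrite (real_lim _ _ Hl).
    apply Rabs_le. split.
    - assert (Hc := is_lim_seq_const (- (3/s))).
      pose proof (is_lim_seq_le _ _ _ _ (fun n => proj1 (proj1 (Rabs_le_between _ _) (L2_bound r n s hr hs))) Hc Hl).
      simpl in H. auto.
    - assert (Hc := is_lim_seq_const (3/s)).
      pose proof (is_lim_seq_le _ _ _ _ (fun n => proj2 (proj1 (Rabs_le_between _ _) (L2_bound r n s hr hs))) Hl Hc).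
      simpl in H. auto. }
  assert (FL : is_lim F p_infty 0).
  { apply is_lim_spec. intros eps. simpl.
    exists (Rmax 1 (3/eps)). intros s Hs.
    pose proof (Rmax_l 1 (3/eps)). pose proof (Rmax_r 1 (3/eps)).
    pose proof (FB s ltac:(lra)) as B.
    rewrite Rminus_0_r.
    pose proof (cond_pos eps).
    assert (3 / s < eps).
    { apply (Rmult_lt_reg_r s); [lra|]. unfold Rdiv. rewrite Rmult_assoc, Rinv_l by lra.
      assert (3 = eps * (3/eps)) by (field; lra). nra. }
    lra. }
  exists F. split; [exists G1; intros s hs; split; auto|].
  split; [auto|]. split; [auto|].
  intros f Hf Hfl s hs.
  set (h := fun t => f t - F t).
  assert (Hh : forall t, 0 < t -> h (t + 2*r) = - h t).
  { intros t ht. unfold h. pose proof (Hf t ht). pose proof (FE t ht). lra. }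
  assert (Hk : forall k, Rabs (h (s + INR k * (2*r))) = Rabs (h s)).
  { induction k as [|k IH].
    - simpl. replace (s + 0 * (2*r)) with s by ring. auto.
    - rewrite S_INR. replace (s + (INR k + 1) * (2*r)) with ((s + INR k * (2*r)) + 2*r) by ring.
      rewrite Hh, Rabs_Ropp; auto. pose proof (pos_INR k). nra. }
  destruct (Req_dec (h s) 0) as [E|E]; [unfold h in E; lra|].
  exfalso.
  assert (he : 0 < Rabs (h s) / 2) by (apply Rdiv_lt_0_compat; [apply Rabs_pos_lt; auto| lra]).
  apply is_lim_spec in Hfl. apply is_lim_spec in FL.
  destruct (Hfl (mkposreal _ he)) as [M1 HM1].
  destruct (FL (mkposreal _ he)) as [M2 HM2].
  destruct (INR_unbounded (Rabs (Rmax M1 M2 - s) / (2*r))) as [k Hk'].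
  assert (INR k * (2*r) > Rabs (Rmax M1 M2 - s)).
  { apply (Rmult_gt_compat_r (2*r)) in Hk'; [|lra].
    unfold Rdiv in Hk'. rewrite Rmult_assoc, Rinv_l in Hk'; lra. }
  pose proof (Rle_abs (Rmax M1 M2 - s)).
  pose proof (Rmax_l M1 M2). pose proof (Rmax_r M1 M2).
  set (t := s + INR k * (2*r)) in *.
  assert (A1 := HM1 t ltac:(unfold t; lra)). assert (A2 := HM2 t ltac:(unfold t; lra)).
  simpl in A1, A2. rewrite Rminus_0_r in A1, A2.
  pose proof (Hk k) as Q. fold t in Q.
  unfold h in Q. pose proof (Rabs_triang (f t) (- F t)) as T3. rewrite Rabs_Ropp in T3.
  unfold h, Rminus in *. lra.
Qed.
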